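(* Let $(E,\mathscr{T},\le)$ be a topological preordered space and let $c_1:E\to c_1E$, $c_2:E\to c_2E$ be preorder compactifications of $E$ with $c_1E$ and $c_2E$ Hausdorff. If $c_1\le c_2$, then the continuous isotone map $C:c_2E\to c_1E$ with $C\circ c_2=c_1$ satisfies $C(c_2E)=c_1E$, $C(c_2(E))=c_1(E)$ and $C(c_2E\setminus c_2(E))=c_1E\setminus c_1(E)$.
   Context: A topological preordered space is a triple $(E,\mathscr{T},\le)$ with $(E,\mathscr{T})$ a topological space and $\le$ a reflexive transitive relation on $E$. A map is isotone if $x\le y\Rightarrow f(x)\le f(y)$. A preorder embedding is a continuous isotone injective map which is a homeomorphism onto its image and whose inverse (on the image, with the induced preorder) is isotone. A preorder compactification of $E$ is a preorder embedding $c:E\to cE$ into a compact topological preordered space $(cE,\mathscr{T}_c,\le_c)$ with $c(E)$ dense in $cE$. For two preorder compactifications, $c_1\le c_2$ means there is a continuous isotone map $C:c_2E\to c_1E$ with $C\circ c_2=c_1$. *)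

(* Defs.v *)
From HB Require Import structures.
From mathcomp Require Import all_boot all_order all_algebra.
From mathcomp Require Import all_classical all_reals all_analysis.
Set Implicit Arguments. Unset Strict Implicit. Unset Printing Implicit Defensive.
Local Open Scope classical_set_scope.

(* A preorder (reflexive transitive relation) on a type. A topological
   preordered space is a topologicalType T together with such a relation. *)
Definition is_preorder (T : Type) (le : T -> T -> Prop) : Prop :=
  (forall x, le x x) /\ (forall x y z, le x y -> le y z -> le x z).

Definition isotone (T U : Type) (leT : T -> T -> Prop) (leU : U -> U -> Prop)
  (f : T -> U) : Prop := forall x y, leT x y -> leU (f x) (f y).

(* f is a homeomorphism onto its image (with the subspace topology):
   f is continuous and the image of every open set of T is relatively open
   in range f. *)
Definition open_onto_image (T U : topologicalType) (f : T -> U) : Prop :=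
  forall A : set T, open A -> exists B : set U, open B /\ f @` A = B `&` range f.

Definition preorder_embedding (T U : topologicalType)
  (leT : T -> T -> Prop) (leU : U -> U -> Prop) (f : T -> U) : Prop :=
  [/\ continuous f, isotone leT leU f, injective f,
      open_onto_image f & (forall x y, leU (f x) (f y) -> leT x y)].

Definition preorder_compactification (E cE : topologicalType)
  (le : E -> E -> Prop) (leC : cE -> cE -> Prop) (c : E -> cE) : Prop :=
  [/\ is_preorder leC, compact [set: cE], preorder_embedding le leC c
    & dense (range c)].

(* Main.v *)
Require Import Defs.
From HB Require Import structures.
From mathcomp Require Import all_boot all_order all_algebra.
From mathcomp Require Import all_classical all_reals all_analysis.
Local Open Scope classical_set_scope.

Theorem mainTheorem2 (E cE1 cE2 : topologicalType)
  (le : E -> E -> Prop) (le1 : cE1 -> cE1 -> Prop) (le2 : cE2 -> cE2 -> Prop)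
  (c1 : E -> cE1) (c2 : E -> cE2) :
  is_preorder le ->
  preorder_compactification le le1 c1 ->
  preorder_compactification le le2 c2 ->
  hausdorff_space cE1 -> hausdorff_space cE2 ->
  forall C : cE2 -> cE1,
    continuous C -> isotone le2 le1 C -> C \o c2 = c1 ->
    [/\ C @` [set: cE2] = [set: cE1],
        C @` range c2 = range c1 &
        C @` (~` range c2) = ~` range c1].
Proof.
move=> _ [_ cpt1 [c1c _ c1inj c1op _] d1] [_ cpt2 [c2c _ c2inj c2op _] d2]
  h1 h2 C Cc _ Cc2.
have Ce : forall e, C (c2 e) = c1 e by move=> e; rewrite -Cc2.
have surj : C @` [set: cE2] = [set: cE1].
  apply/seteqP; split => // z _.
  have cl : closed (C @` [set: cE2]).
    apply: compact_closed => //; apply: continuous_compact => //.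
    by apply: continuous_subspaceT => x; exact: Cc.
  apply: contrapT => nz.
  have [w [nw [w' _ ew]]] : (~` (C @` [set: cE2])) `&` range c1 !=set0.
    apply: d1; first by exists z.
    by rewrite openC.
  by apply: nw; exists (c2 w') => //; rewrite Ce -ew.
have rng : C @` range c2 = range c1.
  apply/seteqP; split.
    by move=> _ [_ [e _ <-] <-]; exists e => //; rewrite Ce.
  by move=> _ [e _ <-]; exists (c2 e); [exists e|rewrite Ce].
have key : forall y x, ~ range c2 y -> C y = c1 x -> False.
  move=> y x ny Cy.
  have neq : y != c2 x by apply/eqP => eyx; apply: ny; exists x.
  move: h2; rewrite open_hausdorff => /(_ _ _ neq) [[U V] /= [/set_mem Uy /set_mem Vx] [oU oV /eqP UV]].
  have oW : open (c2 @^-1` V) by apply: open_comp => // t _; exact: c2c.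
  have [B [oB eB]] := c1op _ oW.
  have Bx : B (c1 x).
    have : (c1 @` (c2 @^-1` V)) (c1 x) by exists x.
    by rewrite eB => -[].
  have oCB : open (C @^-1` B) by apply: open_comp => // t _; exact: Cc.
  have [t [[Uz CBz] [e _ et]]] : (U `&` C @^-1` B) `&` range c2 !=set0.
    apply: d2; first by exists y; split => //=; rewrite Cy.
    exact: openI.
  subst t.
  have : (B `&` range c1) (c1 e) by split; [rewrite -Ce|exists e].
  rewrite -eB => -[e' /= Ve' /c1inj ee']; subst e'.
  by have : (U `&` V) (c2 e) by []; rewrite UV.
split => //.
apply/seteqP; split.
  move=> _ [y ny <-] [x _ /esym Cyx].
  exact: (key y x ny Cyx).
move=> z nz.
have : (C @` [set: cE2]) z by rewrite surj.
move=> [y _ Cyz]; exists y => // -[e _ ey].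
apply: nz; exists e; first by []. by rewrite -Cyz -ey Ce.
Qed.
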